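(* For every integer $n\ge1$, the polynomials $\operatorname{num}(n,x)$ and $\operatorname{den}(n,x)$ are coprime in $\mathbb{Z}[x]$, i.e. $\gcd(\operatorname{num}(n,x),\operatorname{den}(n,x))=1$.
   Context: A partition $\lambda$ of $n\ge 0$ (written $\lambda\vdash n$) is a finite nonincreasing sequence of positive integers summing to $n$; $m_\lambda(i)$ denotes the number of parts of $\lambda$ equal to $i$ (the empty partition is the unique partition of $0$). For $\lambda\vdash n$ define $$h_\lambda(x)=\prod_{i\ge1}(1+x^i)^{\lfloor n/i\rfloor-m_\lambda(i)}\in\mathbb{Z}[x],\qquad \operatorname{den}^*(n,x)=\prod_{i\ge1}(1+x^i)^{\lfloor n/i\rfloor},$$ (finite products since $\lfloor n/i\rfloor=0$ for $i>n$), so that $\sum_{\lambda\vdash n}\prod_j(1+x^{\lambda_j})^{-1}=\sum_{\lambda\vdash n}h_\lambda(x)/\operatorname{den}^*(n,x)$. Let $G(n,x)=\gcd\{h_\lambda(x):\lambda\vdash n\}$ in $\mathbb{Z}[x]$ (normalized to have positive leading coefficient; it is a product of cyclotomic polynomials), and define $$\operatorname{num}(n,x)=\frac{1}{G(n,x)}\sum_{\lambda\vdash n}h_\lambda(x),\qquad \operatorname{den}(n,x)=\frac{\operatorname{den}^*(n,x)}{G(n,x)}.$$ Note $G(n,x)$ is the gcd of the summands, not of $\sum_\lambda h_\lambda$ and $\operatorname{den}^*$. *)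

(* Defs.v *)
From HB Require Import structures.
From mathcomp Require Import all_boot all_order all_algebra.
Set Implicit Arguments. Unset Strict Implicit. Unset Printing Implicit Defensive.
Import Order.TTheory GRing.Theory Num.Theory.
Local Open Scope ring_scope.

(* A partition lambda of n is encoded by its multiplicity function:
   m : 'I_n -> 'I_n.+1, where m i = m_lambda(i+1) is the number of parts
   equal to i+1 (parts are in 1..n, multiplicities are <= n).
   m encodes a partition of n iff sum_i (i+1) * m i = n. This is a bijection
   between partitions of n and such multiplicity functions. *)
Definition mult_fun (n : nat) := {ffun 'I_n -> 'I_n.+1}.

Definition is_partition (n : nat) (m : mult_fun n) : bool :=
  (\sum_(i < n) i.+1 * m i)%N == n.

Definition h_part (n : nat) (m : mult_fun n) : {poly int} :=
  \prod_(i < n) (1 + 'X^(i.+1)) ^+ (n %/ i.+1 - m i)%N.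

Definition den_star (n : nat) : {poly int} :=
  \prod_(i < n) (1 + 'X^(i.+1)) ^+ (n %/ i.+1)%N.

Definition sum_h (n : nat) : {poly int} :=
  \sum_(m : mult_fun n | is_partition m) h_part m.

Definition zdvd (d p : {poly int}) : Prop := exists q : {poly int}, p = q * d.

Definition is_gcd_h (n : nat) (G : {poly int}) : Prop :=
  (forall m : mult_fun n, is_partition m -> zdvd G (h_part m)) /\
  (forall d : {poly int},
      (forall m : mult_fun n, is_partition m -> zdvd d (h_part m)) -> zdvd d G).

Definition zcoprime (a b : {poly int}) : Prop :=
  forall d : {poly int}, zdvd d a -> zdvd d b -> d \is a GRing.unit.

(* Main.v *)
From Stdlib Require Import Rtrigo1 Rtrigo_def Rdefinitions RIneq.
From mathcomp Require Import Rstruct complex.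
Require Import Defs.
From HB Require Import structures.
From mathcomp Require Import all_boot all_order all_algebra all_field.
From mathcomp Require Import zify ring lra.
Import Order.TTheory GRing.Theory Num.Theory.
Local Open Scope ring_scope.


Section Trig.
Variable j : nat.
Hypothesis j_gt0 : (0 < j)%N.
Definition RR := Rdefinitions.R.
Definition th : RR := PI / (j.*2)%:R.
Definition ang (k : nat) : RR := k%:R * th.
Definition eta : RR[i] := Complex (cos th) (sin th).

Lemma mulcE (a b c d : RR) : (Complex a b) * (Complex c d) = Complex (a*c - b*d) (a*d + b*c).
Proof. by []. Qed.

Lemma etaX k : eta ^+ k = Complex (cos (ang k)) (sin (ang k)).
Proof.
elim: k => [|k IH]; first by rewrite expr0 /ang mul0r cos_0 sin_0.
rewrite exprS IH /eta mulcE /ang mulrS mulrDl mul1r cosD sinD.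
by congr Complex; rewrite addrC.
Qed.
End Trig.
Section Trig2.
Variable j : nat.
Hypothesis j_gt0 : (0 < j)%N.
Local Notation th := (th j).
Local Notation ang := (ang j).
Local Notation eta := (eta j).
Definition beta := eta ^+ 2.

Lemma PI_gt0' : (0 : RR) < PI.
Proof. by apply/RltP; apply: PI_RGT_0. Qed.

Lemma th_gt0 : 0 < th.
Proof. rewrite /th divr_gt0 ?PI_gt0' // ltr0n double_gt0 //. Qed.

Lemma PI_th : PI = 2 * j%:R * th.
Proof.
rewrite /th -mul2n natrM [RHS]mulrC divfK //.
by rewrite mulf_neq0 // pnatr_eq0 -lt0n.
Qed.

Lemma angE k : ang k = k%:R * th. Proof. by []. Qed.

Lemma betaX k : beta ^+ k = Complex (cos (ang k.*2)) (sin (ang k.*2)).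
Proof. by rewrite /beta -exprM mulnC muln2 etaX. Qed.

Lemma beta_j : beta ^+ j = -1.
Proof.
rewrite betaX.
have -> : ang j.*2 = PI by rewrite angE PI_th -mul2n natrM mulrA.
rewrite cos_PI sin_PI.
by rewrite -(rmorphN1 (real_complex RR)).
Qed.

Lemma Im_betaX d : (0 < d < j)%N -> 0 < complex.Im (beta ^+ d).
Proof.
case/andP=> d0 dj; rewrite betaX /=.
apply/RltP; apply: sin_gt_0; apply/RltP.
  by rewrite angE mulr_gt0 ?th_gt0 // ltr0n double_gt0.
rewrite angE PI_th -mul2n natrM ltr_pM2r ?th_gt0 // ltr_pM2l // ltr_nat.
exact: dj.
Qed.

Lemma half_PI : PI / 2 = j%:R * th.
Proof. by rewrite PI_th mulrC !mulrA mulVf ?mul1r // pnatr_eq0. Qed.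

Lemma R2E : IZR 2 = 2%:R :> RR.
Proof. by rewrite IZRposE INRE. Qed.

Definition w (p : nat) : RR := 2 * cos (ang p).

Lemma w_gt0 p : (p < j)%N -> 0 < w p.
Proof.
move=> pj; rewrite /w mulr_gt0 //; apply/RltP; apply: cos_gt_0; apply/RltP.
  rewrite RoppE RdivE R2E half_PI. have := th_gt0. rewrite angE.
  have : (0 : RR) <= p%:R by rewrite ler0n.
  have : (0 : RR) < j%:R by rewrite ltr0n.
  move=> h0 h1 h2. nra.
rewrite RdivE R2E half_PI angE. have := th_gt0.
have : (p%:R + 1 <= j%:R :> RR) by rewrite natr1 ler_nat.
move=> h1 h2. nra.
Qed.

Lemma addcE (a b c d : RR) : (Complex a b) + (Complex c d) = Complex (a + c) (b + d).
Proof. by []. Qed.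
Lemma onecE : 1 = Complex 1 0 :> RR[i]. Proof. by []. Qed.
Lemma realcE (a : RR) : (real_complex RR a) = Complex a 0. Proof. by []. Qed.

Lemma one_plus_betaX p : 1 + beta ^+ p = eta ^+ p * (real_complex RR (w p)).
Proof.
rewrite betaX etaX /w realcE onecE addcE mulcE.
have -> : ang p.*2 = ang p + ang p by rewrite !angE -addnn natrD mulrDl.
rewrite cosD sinD.
have h := sin2_cos2 (ang p); rewrite /Rsqr !RmultE RplusE R1E in h.
set c := cos (ang p) in h *; set s0 := sin (ang p) in h *.
have hs : s0 * s0 = 1 - c * c by rewrite -h addrK.
congr Complex; rewrite ?hs; ring.
Qed.
End Trig2.


Set Implicit Arguments. Unset Strict Implicit. Unset Printing Implicit Defensive.


Section Comb.
Variables n j : nat.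
Hypothesis j_gt0 : (0 < j)%N.
Hypothesis j_le_n : (j <= n)%N.

Definition jodd (p : nat) : bool := (j %| p)%N && odd (p %/ j).
Definition q := (n %/ j)%N.
Definition r := (n %% j)%N.
Definition am (m : mult_fun n) (i : 'I_n) : nat := (n %/ i.+1 - m i)%N.
Definition sm (m : mult_fun n) : nat := (\sum_(i < n | jodd i.+1) m i)%N.
Definition SS : nat := (\sum_(i < n | jodd i.+1) n %/ i.+1)%N.

Lemma jodd_ge p : (0 < p)%N -> jodd p -> (j <= p)%N.
Proof. by move=> p0 /andP[H _]; apply: dvdn_leq. Qed.

Lemma jodd_gt p : jodd p -> (j < p)%N -> (3 * j <= p)%N.
Proof.
case/andP=> /dvdnP[k ->]; rewrite mulnK //.
case: k => [|[|[|k]]] //= _; first by rewrite mul1n ltnn.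
by move=> _; rewrite leq_mul2r; apply/orP; right; lia.
Qed.

Lemma part_le (m : mult_fun n) i : is_partition m -> (m i <= n %/ i.+1)%N.
Proof.
move/eqP=> Hm; rewrite leq_divRL // mulnC -[X in (_ <= X)%N]Hm.
by rewrite (bigD1 i) //= leq_addr.
Qed.

Lemma sm_le (m : mult_fun n) : is_partition m -> (sm m <= q)%N.
Proof.
move/eqP=> Hm; rewrite /q leq_divRL // mulnC /sm big_distrr /= -[X in (_ <= X)%N]Hm.
rewrite [X in (_ <= X)%N](bigID (fun i : 'I_n => jodd i.+1)) /=.
apply: leq_trans (leq_addr _ _); apply: leq_sum => i Hi.
by rewrite leq_mul2r jodd_ge ?orbT.
Qed.

Definition ij : 'I_n := Ordinal (leq_trans (eq_leq (prednK j_gt0)) j_le_n).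

Lemma ijE : (ij : nat).+1 = j.
Proof. by rewrite /= prednK. Qed.

Lemma jodd_j : jodd j.
Proof. by rewrite /jodd dvdnn divnn j_gt0. Qed.

Lemma q_le_SS : (q <= SS)%N.
Proof.
rewrite /SS (bigD1 ij) /=; last by rewrite ijE jodd_j.
by rewrite ijE leq_addr.
Qed.

Lemma sum_am (m : mult_fun n) : is_partition m ->
  (\sum_(i < n | jodd i.+1) am m i = SS - sm m)%N.
Proof.
move=> Hm; apply/eqP; rewrite -(eqn_add2r (sm m)) subnK; last first.
  by rewrite /sm /SS; apply: leq_sum => i _; apply: part_le.
rewrite /sm -big_split /=; apply/eqP/eq_bigr => i _.
by rewrite /am subnK // part_le.
Qed.

Lemma n_eq : n = (q * j + r)%N.
Proof. exact: divn_eq. Qed.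
Lemma r_lt : (r < j)%N.
Proof. exact: ltn_pmod. Qed.

Lemma minimizer_big (m : mult_fun n) (i : 'I_n) : is_partition m -> sm m = q ->
  (j < i.+1)%N -> m i = 0%N :> nat.
Proof.
move=> Hp Hs ji; apply/eqP; rewrite -leqn0 leqNgt; apply/negP => mi0.
move/eqP: Hp => Hp.
have key : forall k : 'I_n, (j * (if jodd k.+1 then (m k : nat) else 0) + (if k == i then j else 0) <= k.+1 * m k)%N.
  move=> k; case: eqP => [->|_].
    case Ho: (jodd i.+1) => /=.
      have := jodd_gt Ho ji; move: mi0; nia.
    move: mi0 ji; nia.
  rewrite addn0; case Ho: (jodd k.+1) => /=; last by rewrite muln0.
  by rewrite leq_mul2r (jodd_ge (ltn0Sn _) Ho) orbT.
have : (\sum_(k < n) (j * (if jodd k.+1 then (m k : nat) else 0) + (if k == i then j else 0)) <= \sum_(k < n) k.+1 * m k)%N.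
  by apply: leq_sum => k _; apply: key.
rewrite Hp big_split /= -big_distrr /=.
rewrite -big_mkcond /= -/(sm m) Hs -big_mkcond /= big_pred1_eq.
have := n_eq; have := r_lt; lia.
Qed.

Lemma minimizer_j (m : mult_fun n) : is_partition m -> sm m = q -> m ij = q :> nat.
Proof.
move=> Hp Hs; rewrite -Hs /sm (bigD1 ij) /=; last by rewrite ijE jodd_j.
rewrite big1 ?addn0 // => k /andP[Hk kij]; apply: minimizer_big => //.
rewrite ltn_neqAle jodd_ge // andbT; apply: contra kij => /eqP e.
by apply/eqP/val_inj/eq_add_S; rewrite ijE.
Qed.

Lemma minimizer_small (m : mult_fun n) : is_partition m -> sm m = q ->
  (\sum_(i < n | (i.+1 < j)%N) i.+1 * m i)%N = r.
Proof.
move=> Hp Hs; move/eqP: (Hp) => Hn.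
have E := n_eq; rewrite -[X in X = _]Hn (bigID (fun i : 'I_n => (i.+1 < j)%N)) /= in E.
rewrite [X in (_ + X)%N](bigD1 ij) /= in E; last by rewrite ijE ltnn.
rewrite ijE minimizer_j // [X in (_ + (_ + X))%N]big1 ?addn0 in E; first by rewrite [(j * q)%N]mulnC addnC in E; apply: addnI E.
move=> k /andP[Hk kij]; rewrite minimizer_big ?muln0 //.
rewrite ltn_neqAle leqNgt Hk andbT; apply: contra kij => /eqP e.
by apply/eqP/val_inj/eq_add_S; rewrite ijE.
Qed.
Lemma minimizer_val (m : mult_fun n) (i : 'I_n) : is_partition m -> sm m = q ->
  ~~ (i.+1 < j)%N -> (m i : nat) = if i == ij then q else 0%N.
Proof.
move=> Hp Hs Hi; case: eqP => [-> | ne]; first exact: minimizer_j.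
apply: minimizer_big => //; rewrite ltn_neqAle leqNgt Hi andbT.
apply/eqP => e; apply: ne; apply: val_inj; apply: eq_add_S; rewrite ijE //.
Qed.

Lemma sumnB_le (I : finType) (P : pred I) (a b : I -> nat) :
  (forall i, P i -> b i <= a i)%N ->
  (\sum_(i | P i) (a i - b i) = \sum_(i | P i) a i - \sum_(i | P i) b i)%N.
Proof.
move=> H; apply/eqP; rewrite -(eqn_add2r (\sum_(i | P i) b i)) subnK ?leq_sum //.
by rewrite -big_split /=; apply/eqP/eq_bigr => i Pi; rewrite subnK ?H.
Qed.

Lemma n_gt0 : (0 < n)%N.
Proof. exact: leq_trans j_gt0 j_le_n. Qed.
Definition i0 : 'I_n := Ordinal n_gt0.

Lemma m0_bound (i : 'I_n) : (((i.+1 == j) * q + ((i : nat) == 0%N) * r) < n.+1)%N.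
Proof.
rewrite ltnS; have := n_eq; have := r_lt; have := j_gt0.
case: (i.+1 == j); case: ((i : nat) == 0%N) => /=; nia.
Qed.

Definition m0 : mult_fun n := [ffun i : 'I_n => inord ((i.+1 == j) * q + ((i : nat) == 0%N) * r)].

Lemma m0E i : (m0 i : nat) = ((i.+1 == j) * q + ((i : nat) == 0%N) * r)%N.
Proof. by rewrite ffunE inordK // m0_bound. Qed.

Lemma m0_part : is_partition m0.
Proof.
apply/eqP; under eq_bigr => i _ do rewrite m0E mulnDr.
rewrite big_split /= (bigD1 ij) //= ijE eqxx mul1n big1 ?addn0; last first.
  move=> i ne; case: eqP; rewrite ?muln0 // => e; case/eqP: ne.
  by apply: val_inj; apply: eq_add_S; rewrite ijE.
rewrite (bigD1 i0) //= mul1n big1 ?addn0; last first.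
  by move=> i ne; case: eqP; rewrite ?muln0 // => e; case/eqP: ne; apply: val_inj.
by rewrite mul1n [in RHS]n_eq mulnC.
Qed.

Lemma m0_sm : sm m0 = q.
Proof.
apply/eqP; rewrite eqn_leq sm_le ?m0_part //.
rewrite /sm (bigD1 ij) /=; last by rewrite ijE jodd_j.
by rewrite m0E ijE eqxx mul1n -addnA leq_addr.
Qed.
End Comb.


Section Polys.
Variables n j : nat.
Hypothesis j_gt0 : (0 < j)%N.
Hypothesis j_le_n : (j <= n)%N.
Local Notation jodd := (jodd j).
Local Notation q := (q n j).
Local Notation sm := (sm j).
Local Notation am := (am (n:=n)).
Local Notation SS := (SS n j).

Definition Qp (p : nat) : {poly int} := \sum_(s < p %/ j) (- 'X^j) ^+ s.

Lemma Qp_spec p : jodd p -> 1 + 'X^p = (1 + 'X^j) * Qp p.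
Proof.
case/andP=> /dvdnP[k ->]; rewrite mulnK // => ok.
have := subrX1 (- 'X^j : {poly int}) k.
rewrite exprNn -signr_odd ok expr1 mulN1r -exprM mulnC => h.
have e : - (1 + 'X^j) = - 'X^j - 1 :> {poly int} by ring.
apply: oppr_inj; rewrite -mulNr /Qp mulnK // e -h; ring.
Qed.
Definition Fi (m : mult_fun n) (i : 'I_n) : {poly int} :=
  if jodd i.+1 then Qp i.+1 ^+ am m i else (1 + 'X^(i.+1)) ^+ am m i.
Definition Dp : {poly int} := (1 + 'X^j) ^+ (SS - q).
Definition Rm (m : mult_fun n) : {poly int} :=
  (1 + 'X^j) ^+ (q - sm m) * \prod_(i < n) Fi m i.

Lemma h_decomp m : is_partition m -> h_part m = Dp * Rm m.
Proof.
move=> Hp.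
have E : h_part m = \prod_(i < n) ((if jodd i.+1 then (1 + 'X^j) ^+ am m i else 1) * Fi m i).
  apply: eq_bigr => i _; rewrite /Fi /am; case: ifP => Ho; last by rewrite mul1r.
  by rewrite (Qp_spec Ho) exprMn.
rewrite E big_split /= -big_mkcond /= prodrXr sum_am // /Rm /Dp mulrA -exprD.
congr (_ ^+ _ * _).
have := sm_le j_gt0 Hp; have := q_le_SS j_gt0 j_le_n; lia.
Qed.
End Polys.


Section Eval.
Variables n j : nat.
Hypothesis j_gt0 : (0 < j)%N.
Hypothesis j_le_n : (j <= n)%N.
Local Notation jodd := (jodd j).
Local Notation q := (q n j).
Local Notation r := (r n j).
Local Notation sm := (sm j).
Local Notation am := (am (n:=n)).
Local Notation SS := (SS n j).
Local Notation beta := (beta j).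
Local Notation eta := (eta j).
Local Notation CC := (RR[i]).

Definition ev (p : {poly int}) : CC := (map_poly (intr : int -> CC) p).[beta].

Lemma evM p1 p2 : ev (p1 * p2) = ev p1 * ev p2.
Proof. by rewrite /ev rmorphM hornerM. Qed.
Lemma evD p1 p2 : ev (p1 + p2) = ev p1 + ev p2.
Proof. by rewrite /ev rmorphD hornerD. Qed.
Lemma ev1 : ev 1 = 1.
Proof. by rewrite /ev rmorph1 hornerC. Qed.
Lemma evN p : ev (- p) = - ev p.
Proof. by rewrite /ev rmorphN hornerN. Qed.
Lemma evXn k : ev 'X^k = beta ^+ k.
Proof. by rewrite /ev map_polyXn hornerXn. Qed.
Lemma evexp p k : ev (p ^+ k) = ev p ^+ k.
Proof. by rewrite /ev rmorphXn horner_exp. Qed.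
Lemma ev_prod (I : finType) (P : pred I) (F : I -> {poly int}) :
  ev (\prod_(i | P i) F i) = \prod_(i | P i) ev (F i).
Proof. by rewrite /ev rmorph_prod horner_prod. Qed.
Lemma ev_sum (I : finType) (P : pred I) (F : I -> {poly int}) :
  ev (\sum_(i | P i) F i) = \sum_(i | P i) ev (F i).
Proof. by rewrite /ev rmorph_sum horner_sum. Qed.

Lemma neg1_neq1 : (-1 : CC) != 1.
Proof.
apply/eqP => h; have : (2%:R : CC) = 0 by rewrite -[2%N]/(1 + 1)%N natrD -{1}h addNr.
by move/eqP; rewrite pnatr_eq0.
Qed.

Lemma beta2j : beta ^+ (j.*2) = 1.
Proof. by rewrite -addnn exprD beta_j // mulrNN mulr1. Qed.

Lemma beta_pow_eq1 x : beta ^+ x = 1 -> (j.*2 %| x)%N.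
Proof.
move=> h; have j2 : (0 < j.*2)%N by rewrite double_gt0.
have hd : beta ^+ (x %% j.*2) = 1.
  by move: h; rewrite {1}(divn_eq x j.*2) exprD mulnC exprM beta2j expr1n mul1r.
rewrite /dvdn; move: hd; have := ltn_pmod x j2.
set d := (x %% j.*2)%N => dlt hd.
case: (ltngtP d j) => [dj | jd | dj].
- case: (posnP d) => [d0|d0]; first by apply/eqP.
  have := @Im_betaX j j_gt0 d; rewrite d0 dj hd /= => /(_ isT).
  by rewrite ltxx.
- have e : beta ^+ (d - j) = -1.
    by move: hd; rewrite -{1}(subnK (ltnW jd)) exprD beta_j // mulrN1 => /eqP; rewrite eqr_oppLR => /eqP.
  have := @Im_betaX j j_gt0 (d - j); rewrite e /=.
  have -> : (0 < d - j < j)%N by apply/andP; split; rewrite ?subn_gt0 //; move: dlt; rewrite -addnn; lia.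
  by rewrite oppr0 ltxx => /(_ isT).
- by move: hd; rewrite dj beta_j // => /eqP; rewrite (negbTE neg1_neq1).
Qed.

Lemma one_plus_beta_neq0 p : (0 < p)%N -> ~~ jodd p -> 1 + beta ^+ p != 0.
Proof.
move=> p0 nj; apply/eqP => h.
have bp : beta ^+ p = -1 by apply/eqP; rewrite -addr_eq0 addrC h.
have : (j.*2 %| p.*2)%N by apply: beta_pow_eq1; rewrite -addnn exprD bp mulrNN mulr1.
rewrite -!muln2 dvdn_pmul2r // => /dvdnP[k pk].
move: nj; rewrite /jodd pk dvdn_mull //= mulnK //.
case: (boolP (odd k)) => // ok _.
move: bp; rewrite pk mulnC exprM beta_j // -signr_odd (negbTE ok) expr0.
by move/eqP; rewrite eq_sym (negbTE neg1_neq1).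
Qed.

Lemma ev_Qp p : jodd p -> ev (Qp j p) = (p %/ j)%:R.
Proof.
move=> _; rewrite /Qp ev_sum.
under eq_bigr => s _ do rewrite evexp evN evXn beta_j // opprK expr1n.
by rewrite sumr_const card_ord.
Qed.

Lemma ev_one_plus k : ev (1 + 'X^k) = 1 + beta ^+ k.
Proof. by rewrite evD ev1 evXn. Qed.
Lemma bj : beta ^+ j = -1. Proof. exact: beta_j. Qed.

Local Notation M0 := (m0 n j).

Definition cm (m : mult_fun n) : RR :=
  if sm m == q then \prod_(i < n | (i.+1 < j)%N) w j i.+1 ^+ am m i else 0.
Definition KK : CC := \prod_(i < n | ~~ (i.+1 < j)%N) ev (Fi j M0 i).
Definition Cexp : nat := (\sum_(i < n | (i.+1 < j)%N) i.+1 * (n %/ i.+1) - r)%N.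
Definition ZZ : CC := eta ^+ Cexp * KK.

Lemma sum_small (m : mult_fun n) : is_partition m -> sm m = q ->
  (\sum_(i < n | (i.+1 < j)%N) i.+1 * am m i)%N = Cexp.
Proof.
move=> Hp Hs; rewrite /Cexp -(minimizer_small j_gt0 j_le_n Hp Hs) -sumnB_le.
  by apply: eq_bigr => i _; rewrite /am mulnBr.
by move=> i _; rewrite leq_mul2l part_le ?orbT.
Qed.

Lemma ev_Rm m : is_partition m -> ev (Rm j m) = (real_complex RR (cm m)) * ZZ.
Proof.
move=> Hp; rewrite /Rm evM evexp ev_one_plus bj subrr.
have := sm_le j_gt0 Hp; rewrite leq_eqVlt => /orP[/eqP eq | lt]; last first.
  rewrite /cm (ltn_eqF lt) expr0n subn_eq0 leqNgt lt /= mul0r.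
  by rewrite rmorph0 mul0r.
rewrite eq subnn expr0 mul1r /cm eq eqxx ev_prod (bigID (fun i : 'I_n => (i.+1 < j)%N)) /=.
have -> : \prod_(i < n | ~~ (i.+1 < j)%N) ev (Fi j m i) = KK.
  apply: eq_bigr => i Hi; congr ev; rewrite /Fi /am.
  rewrite (minimizer_val j_gt0 j_le_n Hp eq Hi).
  by rewrite (minimizer_val j_gt0 j_le_n (m0_part j_gt0 j_le_n) (m0_sm j_gt0 j_le_n) Hi).
have -> : \prod_(i < n | (i.+1 < j)%N) ev (Fi j m i) =
    \prod_(i < n | (i.+1 < j)%N) (eta ^+ (i.+1 * am m i) * (real_complex RR (w j i.+1 ^+ am m i))).
  apply: eq_bigr => i Hi; rewrite /Fi.
  have -> : jodd i.+1 = false.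
    by apply/negbTE; apply: contraL Hi => /(jodd_ge (ltn0Sn _)); rewrite leqNgt.
  by rewrite evexp ev_one_plus one_plus_betaX exprMn -exprM rmorphXn.
rewrite big_split /= prodrXr sum_small // -rmorph_prod /ZZ.
by rewrite mulrCA mulrA.
Qed.
Lemma eta_neq0 : eta != 0.
Proof.
apply/eqP => e; have := bj; rewrite /beta e expr0n /= expr0n; case: eqP => [j0|_]; first by move: j_gt0; rewrite j0.
by move/eqP; rewrite eq_sym oppr_eq0 oner_eq0.
Qed.

Lemma ZZ_neq0 : ZZ != 0.
Proof.
rewrite /ZZ mulf_neq0 ?expf_neq0 ?eta_neq0 //; apply/prodf_neq0 => i Hi.
rewrite /Fi; case: ifP => Ho; rewrite evexp expf_neq0 //.
  rewrite ev_Qp // pnatr_eq0 -lt0n divn_gt0 // leqNgt //.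
by rewrite ev_one_plus one_plus_beta_neq0 ?Ho.
Qed.

Lemma cm_ge0 m : 0 <= cm m.
Proof.
rewrite /cm; case: eqP => // _; apply: prodr_ge0 => i Hi.
by rewrite exprn_ge0 // ltW // w_gt0.
Qed.

Lemma cm_m0_gt0 : 0 < cm M0.
Proof.
rewrite /cm m0_sm // eqxx; apply: prodr_gt0 => i Hi.
by rewrite exprn_gt0 // w_gt0.
Qed.

Lemma sum_ev_Rm :
  \sum_(m : mult_fun n | is_partition m) ev (Rm j m) != 0.
Proof.
rewrite (eq_bigr (fun m => (real_complex RR (cm m)) * ZZ)); last by move=> m Hm; rewrite ev_Rm.
rewrite -mulr_suml -rmorph_sum mulf_neq0 ?ZZ_neq0 //.
have : 0 < \sum_(m : mult_fun n | is_partition m) cm m.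
  rewrite (bigD1 M0) ?m0_part //= ltr_pwDl ?cm_m0_gt0 //.
  by apply: sumr_ge0 => m _; apply: cm_ge0.
by move/gt_eqF; rewrite eq_sym => h; apply/eqP => e; move: h; rewrite -(rmorph0 (real_complex RR)) in e; move/complexI: e => ->; rewrite eqxx.
Qed.
End Eval.


Lemma one_plus_X_neq0 k : (1 + 'X^k : {poly int}) != 0.
Proof.
apply/eqP => h; have := congr1 (fun p : {poly int} => p.[1]) h.
by rewrite /= hornerD hornerC hornerXn expr1n horner0.
Qed.

Lemma ev_num_neq0 n j (G num : {poly int}) : (0 < j)%N -> (j <= n)%N ->
  is_gcd_h n G -> num * G = sum_h n -> ev j num != 0.
Proof.
move=> j0 jn [HG1 HG2] HnG.
have Dd : forall m : mult_fun n, is_partition m -> zdvd (Dp n j) (h_part m).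
  by move=> m Hm; exists (Rm j m); rewrite (h_decomp j0 jn Hm) mulrC.
have [G' EG] := HG2 _ Dd.
have [t Et] := HG1 _ (m0_part j0 jn).
have Dnz : Dp n j != 0 by rewrite /Dp expf_neq0 // one_plus_X_neq0.
have ER : Rm j (m0 n j) = t * G'.
  apply: (mulIf Dnz); rewrite -[RHS]mulrA -EG -Et (h_decomp j0 jn (m0_part j0 jn)) mulrC //.
have evG : ev j G' != 0.
  have := ev_Rm j0 jn (m0_part j0 jn); rewrite ER evM => h.
  have : ev j t * ev j G' != 0.
    rewrite h mulf_neq0 ?ZZ_neq0 //.
    by apply/eqP => e; have := cm_m0_gt0 j0 jn; move/complexI: e => ->; rewrite ltxx.
  by rewrite mulf_eq0 negb_or => /andP[].
have Esum : num * G' = \sum_(m : mult_fun n | is_partition m) Rm j m.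
  apply: (mulIf Dnz); rewrite -mulrA -EG HnG /sum_h mulr_suml.
  by apply: eq_bigr => m Hm; rewrite (h_decomp j0 jn Hm) mulrC.
have := sum_ev_Rm j0 jn; rewrite -ev_sum -Esum evM mulf_eq0 negb_or.
by case/andP.
Qed.


Lemma ev_prod_seq j (r : seq nat) (F : nat -> {poly int}) :
  ev j (\prod_(i <- r) F i) = \prod_(i <- r) ev j (F i).
Proof. by rewrite /ev rmorph_prod horner_prod. Qed.

Lemma ev_XnB1 j k : ev j ('X^k - 1) = beta j ^+ k - 1.
Proof. by rewrite evD evN evXn ev1. Qed.

Lemma ev_Phi_zero j : (0 < j)%N -> ev j 'Phi_(j.*2) = 0.
Proof.
move=> j0; have k0 : (0 < j.*2)%N by rewrite double_gt0.
have := prod_Cyclotomic k0; move/(congr1 (ev j)).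
rewrite ev_prod_seq ev_XnB1 (beta2j j0) subrr => /eqP.
rewrite prodf_seq_eq0 => /hasP[d dk /eqP Pd].
have dd : (d %| j.*2)%N by rewrite dvdn_divisors.
have d0 : (0 < d)%N by apply: dvdn_gt0 dd.
case: (eqVneq d j.*2) => [<- // | ne].
have := prod_Cyclotomic d0; move/(congr1 (ev j)).
rewrite ev_prod_seq ev_XnB1 (big_rem d) -?dvdn_divisors // Pd /= mul0r => /esym /eqP.
rewrite subr_eq0 => /eqP /(beta_pow_eq1 j0 (leqnn j)) kd.
have := dvdn_leq d0 kd; have := dvdn_leq k0 dd; move: ne; lia.
Qed.


Lemma map_ratr_intC (p : {poly int}) :
  map_poly (ratr : rat -> algC) (map_poly (intr : int -> rat) p) = map_poly intr p.
Proof. by rewrite -map_poly_comp; apply: eq_map_poly => x /=; rewrite ratr_int. Qed.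

Lemma map_ratr_intR (p : {poly int}) :
  map_poly (ratr : rat -> RR[i]) (map_poly (intr : int -> rat) p) = map_poly intr p.
Proof. by rewrite -map_poly_comp; apply: eq_map_poly => x /=; rewrite ratr_int. Qed.

Lemma galois (p : {poly int}) (a : algC) k : k.-primitive_root a ->
  root (map_poly intr p) a ->
  exists g : {poly rat}, map_poly (intr : int -> rat) p = g * map_poly intr 'Phi_k.
Proof.
move=> prim rt; have [pr [Dpr _] Hdiv] := minCpolyP a.
have E : pr = map_poly intr 'Phi_k.
  apply: (map_poly_inj (ratr : {rmorphism rat -> algC})).
  by rewrite -Dpr map_ratr_intC (minCpoly_cyclotomic prim) (Cintr_Cyclotomic prim).
have : pr %| map_poly intr p by rewrite -Hdiv map_ratr_intC.
by rewrite E => /dvdpP[g Hg]; exists g.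
Qed.

Lemma den_star_monic n : den_star n \is monic.
Proof.
apply: monic_prod => i _; apply: monic_exp.
by rewrite addrC -polyC1 monicXnaddC.
Qed.

Lemma neg1_neq1C : (-1 : algC) != 1.
Proof.
apply/eqP => h; have : (2%:R : algC) = 0 by rewrite -[2%N]/(1 + 1)%N natrD -{1}h addNr.
by move/eqP; rewrite pnatr_eq0.
Qed.

Theorem theorem1 (n : nat) (G num den : {poly int}) :
  (1 <= n)%N ->
  is_gcd_h n G -> 0 < lead_coef G ->
  num * G = sum_h n -> den * G = den_star n ->
  zcoprime num den.
Proof.
move=> n1 HG _ HnG HdG d [a Ha] [b Hb].
have ld : lead_coef den * lead_coef G = 1 by rewrite -lead_coefM HdG (monicP (den_star_monic n)).
have uden : lead_coef den \is a GRing.unit by apply/unitrPr; exists (lead_coef G).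
have ud : lead_coef d \is a GRing.unit.
  by move: uden; rewrite Hb lead_coefM unitrM => /andP[].
case: (boolP (size d == 1%N)) => [sd1 | sdn1].
  by rewrite poly_unitE sd1 /=; move: ud; rewrite lead_coefE (eqP sd1).
exfalso.
have : size (map_poly (intr : int -> algC) d) != 1%N by rewrite size_map_inj_poly //; apply: intr_inj.
case/closed_rootP => al ral.
have rden : root (map_poly (intr : int -> algC) (den_star n)) al.
  rewrite -HdG Hb !rmorphM /= !rootM; apply/orP; left; apply/orP; right; exact: ral.
have rnum : root (map_poly (intr : int -> algC) num) al.
  rewrite Ha rmorphM /= rootM; apply/orP; right; exact: ral.
move: rden; rewrite /root /den_star rmorph_prod horner_prod => /prodf_eq0[i _].
rewrite rmorphXn horner_exp expf_eq0 => /andP[_].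
rewrite rmorphD rmorph1 /= map_polyXn hornerD hornerC hornerXn => /eqP hp.
have ap : al ^+ i.+1 = -1 by apply/eqP; rewrite -addr_eq0 addrC hp.
have a2 : al ^+ (i.+1).*2 = 1 by rewrite -addnn exprD ap mulrNN mulr1.
have [k prim kd] := prim_order_exists (double_gt0 _ : (0 < (i.+1).*2)%N) a2.
have k0 := prim_order_gt0 prim.
have nkp : ~~ (k %| i.+1)%N by rewrite (prim_order_dvd prim) ap neg1_neq1C.
have ek : ~~ odd k.
  apply/negP => ok; move: kd; rewrite -mul2n Gauss_dvdr ?(negbTE nkp) //.
  by rewrite coprimen2 ok.
set j := k./2.
have kj : k = j.*2 by rewrite /j even_halfK.
have j0 : (0 < j)%N by move: k0; rewrite kj double_gt0.
have jp : (j %| i.+1)%N by move: kd; rewrite kj -!muln2 dvdn_pmul2r.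
have jn : (j <= n)%N.
  by apply: leq_trans (dvdn_leq (ltn0Sn _) jp) (ltn_ord i).
have [g Hg] := galois prim rnum.
have := ev_num_neq0 j0 jn HG HnG.
rewrite /ev -map_ratr_intR Hg rmorphM hornerM.
have := ev_Phi_zero j0; rewrite /ev -map_ratr_intR -kj => ->.
by rewrite mulr0 eqxx.
Qed.
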